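(* Let $f:[0,1]\to[0,1]$ be a surjective continuous function. If $f$ admits a splitting sequence, then there exist a nondegenerate continuum $C\subseteq\varprojlim f$ and a sequence $(C_n)_{n\in\mathbb N}$ of nondegenerate continua $C_n\subseteq\varprojlim f$ with $C_n\neq C$ for all $n$, such that $C_n\to C$ in the Hausdorff metric.
   Context: $\varprojlim f=\{\mathbf x=(x_0,x_1,\dots)\in[0,1]^{\mathbb N}: f(x_{n+1})=x_n\ \forall n\}$ with the topology inherited from the product topology (a compact metric space; the Hausdorff metric is taken with respect to a compatible metric). A sequence $(T_n)_{n\in\mathbb N}$ of closed intervals $T_n\subsetneq[0,1]$ (possibly degenerate) is tight if $f(T_{n+1})=T_n$ for every $n$ and $T_n$ is nondegenerate for all sufficiently large $n$. A tight sequence $(T_n)$, $T_n=[l_n,r_n]$, is a splitting sequence admitted by $f$ if there are an infinite set $N\subseteq\mathbb N$ and nondegenerate closed intervals $S_n\subseteq[0,1]$ ($n\in N$) with $S_n\cap T_n\subseteq\{l_n,r_n\}$ and $f(S_n)=f(T_n)$ for all $n\in N$. *)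

(* Defs.v *)
From mathcomp Require Import all_boot all_order all_algebra.
From mathcomp Require Import all_classical all_reals all_analysis.
Set Implicit Arguments. Unset Strict Implicit. Unset Printing Implicit Defensive.
Import Order.TTheory GRing.Theory Num.Theory.
Import numFieldNormedType.Exports.
Local Open Scope classical_set_scope.
Local Open Scope ring_scope.

(* The ambient space [0,1]^N (we use R^N with the product topology; the
   inverse limit lies inside [0,1]^N). *)
Definition seqR (R : realType) := {ptws nat -> R}.

Definition invlim (R : realType) (f : R -> R) : set (seqR R) :=
  [set x | (forall n, x n \in `[0, 1]) /\ (forall n, f (x n.+1) = x n)].

Definition nondeg_continuum (R : realType) (C : set (seqR R)) : Prop :=
  compact C /\ connected C /\ exists x y, C x /\ C y /\ x <> y.

(* A compatible metric on [0,1]^N (product topology):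
   d(x,y) = sum_k 2^-(k+1) |x_k - y_k|. *)
Definition dprod (R : realType) (x y : seqR R) : R :=
  limn (fun n => \sum_(0 <= k < n) ((2 : R)^-1 ^+ k.+1 * `|x k - y k|)).

Definition dist_to (R : realType) (x : seqR R) (B : set (seqR R)) : R :=
  inf [set dprod x b | b in B].

Definition hdist (R : realType) (A B : set (seqR R)) : R :=
  Num.max (sup [set dist_to a B | a in A]) (sup [set dist_to b A | b in B]).

Definition cint (R : realType) (p : R * R) : set R := `[p.1, p.2].

Definition tight (R : realType) (f : R -> R) (T : nat -> R * R) : Prop :=
  (forall n, 0 <= (T n).1 /\ (T n).1 <= (T n).2 /\ (T n).2 <= 1 /\
             cint (T n) <> `[0, 1]%classic) /\
  (forall n, f @` cint (T n.+1) = cint (T n)) /\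
  (exists m, forall n, (m <= n)%N -> (T n).1 < (T n).2).

Definition splitting_sequence (R : realType) (f : R -> R) (T : nat -> R * R) : Prop :=
  tight f T /\
  exists (N : set nat) (S : nat -> R * R),
    infinite_set N /\
    forall n, N n ->
      0 <= (S n).1 /\ (S n).1 < (S n).2 /\ (S n).2 <= 1 /\
      cint (S n) `&` cint (T n) `<=` [set (T n).1; (T n).2] /\
      f @` cint (S n) = f @` cint (T n).

Definition admits_splitting_sequence (R : realType) (f : R -> R) : Prop :=
  exists T, splitting_sequence f T.

(* Main.v *)
Require Import Defs.
From mathcomp Require Import all_boot all_order all_algebra.
From mathcomp Require Import all_classical all_reals all_analysis.
From mathcomp Require Import ring lra.
Set Implicit Arguments. Unset Strict Implicit. Unset Printing Implicit Defensive.
Import Order.TTheory GRing.Theory Num.Theory.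
Import numFieldNormedType.Exports.
Local Open Scope classical_set_scope.
Local Open Scope ring_scope.
Section D.
Variable R : realType.

Lemma dprod_bound (x y : seqR R) (n : nat) :
  (forall k, `|x k - y k| <= 1) -> (forall k, (k < n)%N -> x k = y k) ->
  0 <= dprod x y <= (2^-1)^+n.
Proof.
move=> H1 Heq.
set s := fun N => \sum_(0 <= k < N) ((2 : R)^-1 ^+ k.+1 * `|x k - y k|).
have s_ge0 N : 0 <= s N.
  by apply: sumr_ge0 => k _; apply: mulr_ge0 => //; apply: exprn_ge0.
have sS N : s N.+1 = s N + (2 : R)^-1 ^+ N.+1 * `|x N - y N|.
  by rewrite /s big_nat_recr.
have snd : nondecreasing_seq s.
  apply/nondecreasing_seqP => N; rewrite sS lerDl.
  by apply: mulr_ge0 => //; apply: exprn_ge0.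
have sb N : s N + (2^-1)^+(maxn N n) <= (2^-1)^+n.
  elim: N => [|N IH]; first by rewrite /s big_geq // add0r max0n.
  rewrite sS; case: (ltnP N n) => hN.
    rewrite Heq // subrr normr0 mulr0 addr0.
    have e1 : maxn N n = n by apply/maxn_idPr; exact: ltnW.
    have e2 : maxn N.+1 n = n by apply/maxn_idPr.
    by rewrite e1 in IH; rewrite e2.
  rewrite (maxn_idPl hN) in IH; rewrite (maxn_idPl (leqW hN)).
  apply: le_trans IH; rewrite -addrA lerD2l exprS.
  have h2 : (0:R) <= 2^-1 ^+ N by apply: exprn_ge0.
  have := H1 N; have := normr_ge0 (x N - y N); nra.
have ub : has_ubound (range s).
  by exists ((2^-1)^+n) => _ [N _ <-]; apply: le_trans (sb N); rewrite lerDl exprn_ge0.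
have cv : cvgn s by apply/cvg_ex; exists (sup (range s)); exact: nondecreasing_cvgn.
rewrite /dprod -/s; apply/andP; split.
  by apply: limr_ge => //; near=> N; apply: s_ge0.
apply: limr_le => //; near=> N; apply: le_trans (sb N).
by rewrite lerDl exprn_ge0.
Unshelve. all: by end_near.
Qed.
End D.
Section H.
Variable R : realType.
Implicit Types A B : set (seqR R).

Lemma side_bound A B (e : R) :
  A !=set0 -> B !=set0 ->
  (forall a b, A a -> B b -> 0 <= dprod a b) ->
  (forall a, A a -> exists2 b, B b & dprod a b <= e) ->
  0 <= sup [set dist_to a B | a in A] <= e.
Proof.
move=> [a0 Aa0] [b0 Bb0] pos H.
have dpos a : A a -> 0 <= dist_to a B.
  move=> Aa; apply: lb_le_inf; first by exists (dprod a b0), b0.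
  by move=> _ [b Bb <-]; exact: pos.
have dle a : A a -> dist_to a B <= e.
  move=> Aa; have [b Bb hb] := H a Aa; apply: le_trans hb.
  have hl : has_lbound [set dprod a b | b in B].
    by exists 0 => _ [b' Bb' <-]; exact: pos.
  by apply: (ge_inf hl); exists b.
apply/andP; split.
  apply: le_trans (dpos a0 Aa0) _; apply: ub_le_sup.
    by exists e => _ [a Aa <-]; exact: dle.
  by exists a0.
apply: ge_sup; first by exists (dist_to a0 B), a0.
by move=> _ [a Aa <-]; exact: dle.
Qed.

Lemma hdist_bound A B (e : R) :
  A !=set0 -> B !=set0 ->
  (forall a b, A a -> B b -> 0 <= dprod a b /\ 0 <= dprod b a) ->
  (forall a, A a -> exists2 b, B b & dprod a b <= e) ->
  (forall b, B b -> exists2 a, A a & dprod b a <= e) ->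
  0 <= hdist A B <= e.
Proof.
move=> An Bn pos H1 H2.
have /andP[s1 s2] := side_bound An Bn (fun a b Aa Bb => (pos a b Aa Bb).1) H1.
have /andP[s3 s4] := side_bound Bn An (fun b a Bb Aa => (pos a b Aa Bb).2) H2.
rewrite /hdist; apply/andP; split.
  by rewrite le_max s1.
by rewrite ge_max s2 s4.
Qed.
End H.
Section L.
Variable R : realType.
Variable f : R -> R.
Hypothesis fc : {within `[0, 1]%classic, continuous f}.
Hypothesis fs : f @` `[0, 1]%classic = `[0, 1]%classic.

Definition clamp (t : R) : R := Num.max 0 (Num.min t 1).
Definition g (t : R) := f (clamp t).

Lemma clamp_in t : `[0, 1]%classic (clamp t).
Proof.
rewrite /clamp /= in_itv /= le_max lexx /= ge_max ler01 /= ge_min lexx orbT.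
by [].
Qed.

Lemma clamp_id t : 0 <= t <= 1 -> clamp t = t.
Proof.
move=> /andP[h0 h1]; rewrite /clamp (min_idPl h1) (max_idPr h0) //.
Qed.

Lemma clamp_cont : continuous clamp.
Proof.
move=> x.
have h1 : {for x, continuous (fun t : R => (Num.min t 1 : R^o))}.
  exact: (@continuous_min R R id (fun _ => 1) x cvg_id (cvg_cst _)).
have := @continuous_max R R (fun _ => 0) (fun t => Num.min t 1) x (cvg_cst _) h1.
by move=> H; exact: H.
Qed.

Lemma g_cont : continuous g.
Proof.
move=> x.
have fw0 := (@subspace_continuousP R `[0,1]%classic R f).1 fc.
have fw := fw0 (clamp x) (clamp_in x).
move=> W /fw; rewrite /within /= => H.
have H2 := @clamp_cont x _ H.
have H3 : nbhs x (clamp @^-1` [set t | t \in `[0,1] -> (f @^-1` W) t]) := H2.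
suff : nbhs x (g @^-1` W) by [].
move: H3; apply: filterS => y /= Hy.
by apply: Hy; rewrite inE; exact: clamp_in.
Qed.

Lemma g_eq t : 0 <= t <= 1 -> g t = f t.
Proof. by move=> h; rewrite /g clamp_id. Qed.


Lemma closedZ (h : R -> R) (lo hi v : R) : continuous h ->
  closed [set t | lo <= t /\ t <= hi /\ h t = v].
Proof.
move=> hc.
have -> : [set t | lo <= t /\ t <= hi /\ h t = v] =
  [set t | lo <= t] `&` [set t | t <= hi] `&` (h @^-1` [set v]).
  by apply/seteqP; split => t /=; [case=> [? [? ?]]|case=> [[? ?] ?]].
apply: closedI; first by apply: closedI; [exact: closed_ge|exact: closed_le].
by apply: preimage_closed; [move=> ? _; exact: hc|exact: closed_eq].
Qed.

Definition btw (u v y : R) := (u <= y <= v) \/ (v <= y <= u).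

Lemma ivt_g a b v : a <= b -> btw (g a) (g b) v -> exists2 c, a <= c <= b & g c = v.
Proof.
move=> ab hv.
have gw : {within `[a, b], continuous g} by apply: continuous_subspaceT; exact: g_cont.
have [|c hc gc] := @IVT R g a b v ab gw.
  case: hv => /andP[h1 h2]; apply/andP; split.
  - by rewrite ge_min h1.
  - by rewrite le_max h2 orbT.
  - by rewrite ge_min h1 orbT.
  - by rewrite le_max h2.
by exists c => //; move: hc; rewrite in_itv.
Qed.

Lemma btw3 u v w : btw u v w \/ btw u w v \/ btw v w u.
Proof. rewrite /btw; case: (lerP u v); case: (lerP v w); case: (lerP u w); move=> *; lra. Qed.

Lemma core p q : p <= q -> exists c d, [/\ p <= c, c <= d, d <= q,
  (forall t, c <= t <= d -> btw (g p) (g q) (g t)) &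
  (forall y, btw (g p) (g q) y -> exists2 t, c <= t <= d & g t = y)].
Proof.
move=> pq.
set al := g p; set be := g q.
set Z1 := [set t | p <= t /\ t <= q /\ g t = al].
have Z1c : closed Z1 by apply: closedZ; exact: g_cont.
have Z1n : Z1 !=set0 by exists p; rewrite /Z1 /= lexx pq.
have Z1u : has_ubound Z1 by exists q => t [_ [? _]].
set c := sup Z1.
have Z1cc : Z1 c by apply: Z1c; exact: closure_sup.
have cmax : forall t, Z1 t -> t <= c by move=> t Zt; exact: (ub_le_sup Z1u).
case: Z1cc => pc [cq gc].
have ngc : continuous (fun s => g (- s)).
  move=> s; apply: (@continuous_comp _ _ _ (fun s : R => - s) g).
    exact: oppr_continuous.
  exact: g_cont.
set Z2 := [set s | - q <= s /\ s <= - c /\ g (- s) = be].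
have Z2c : closed Z2 by apply: closedZ.
have Z2n : Z2 !=set0 by exists (- q); rewrite /Z2 /= lexx opprK lerN2 cq.
have Z2u : has_ubound Z2 by exists (- c) => t [_ [? _]].
set d' := sup Z2.
have Z2d : Z2 d' by apply: Z2c; exact: closure_sup.
have dmax : forall t, Z2 t -> t <= d' by move=> t Zt; exact: (ub_le_sup Z2u).
case: Z2d => qd [dc gd].
exists c, (- d'); split.
- exact: pc.
- by rewrite lerNr.
- by rewrite lerNl.
- move=> t /andP[ct td].
  have [->|nct] := eqVneq t c; first by rewrite gc /btw; lra.
  have [->|ndt] := eqVneq t (- d'); first by rewrite gd /btw; lra.
  have ct' : c < t by rewrite lt_neqAle eq_sym nct ct.
  have td' : t < - d' by rewrite lt_neqAle ndt td.
  have h1 : ~ btw (g t) be al.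
    move=> hb; have [s /andP[ts sd] gs] := @ivt_g t (- d') al (ltW td') ltac:(by rewrite gd).
    have : s <= c by apply: cmax; rewrite /Z1 /=; split; [lra|split; lra].
    lra.
  have h2 : ~ btw al (g t) be.
    move=> hb; have [s /andP[cs st] gs] := @ivt_g c t be ct ltac:(by rewrite gc).
    have : - s <= d' by apply: dmax; rewrite /Z2 /= opprK; split; [lra|split; lra].
    lra.
  move: h1 h2; rewrite /btw; lra.
- move=> y hy.
  have [t ht gt] := @ivt_g c (- d') y ltac:(by rewrite lerNr) ltac:(by rewrite gc gd).
  by exists t.
Qed.

Lemma lift a b : 0 <= a -> a <= b -> b <= 1 ->
  exists c d, [/\ 0 <= c, c <= d, d <= 1 & f @` `[c, d] = `[a, b]%classic].
Proof.
move=> a0 ab b1.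
have : `[0, 1]%classic a by rewrite /= in_itv /= a0 /=; lra.
rewrite -fs => -[u]; rewrite /= in_itv /= => /andP[u0 u1] fu.
have : `[0, 1]%classic b by rewrite /= in_itv /= b1 andbT; lra.
rewrite -fs => -[v]; rewrite /= in_itv /= => /andP[v0 v1] fv.
have gu : g u = a by rewrite g_eq ?u0.
have gv : g v = b by rewrite g_eq ?v0.
have [c [d [c0 cd d1 H1 H2]]] : exists c d, [/\ 0 <= c, c <= d, d <= 1,
   (forall t, c <= t <= d -> a <= g t <= b) &
   (forall y, a <= y <= b -> exists2 t, c <= t <= d & g t = y)].
  case: (lerP u v) => uv.
    have [c [d [uc cd dv H1 H2]]] := core uv.
    exists c, d; split; [lra|lra|lra| |].
    - by move=> t /H1; rewrite gu gv /btw; lra.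
    - by move=> y hy; apply: H2; rewrite gu gv /btw; lra.
  have [c [d [uc cd dv H1 H2]]] := core (ltW uv).
  exists c, d; split; [lra|lra|lra| |].
  - by move=> t /H1; rewrite gu gv /btw; lra.
  - by move=> y hy; apply: H2; rewrite gu gv /btw; lra.
exists c, d; split => //.
apply/seteqP; split.
  move=> y [t]; rewrite /= in_itv /= => ht <-.
  rewrite -g_eq; last lra.
  by rewrite in_itv /=; apply: H1.
move=> y; rewrite /= in_itv /= => /H2 [t ht gt].
exists t; first by rewrite /= in_itv /=.
by rewrite -g_eq // ; lra.
Qed.

Definition Lset (I : nat -> R * R) : set (seqR R) :=
  [set x | (forall k, cint (I k) (x k)) /\ (forall k, f (x k.+1) = x k)].

Definition chain (I : nat -> R * R) := forall k,
  [/\ 0 <= (I k).1, (I k).1 <= (I k).2, (I k).2 <= 1 & f @` cint (I k.+1) = cint (I k)].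

Lemma cintE (p : R * R) y : cint p y <-> p.1 <= y <= p.2.
Proof. by rewrite /cint /= in_itv. Qed.

Lemma agree (x y : seqR R) n : (forall k, f (x k.+1) = x k) -> (forall k, f (y k.+1) = y k) ->
  x n = y n -> forall k, (k <= n)%N -> x k = y k.
Proof.
move=> hx hy; elim: n => [|n IH] e k.
  by rewrite leqn0 => /eqP ->.
rewrite leq_eqVlt => /orP[/eqP -> //|]; rewrite ltnS; apply: IH.
by rewrite -hx -hy e.
Qed.

Local Open Scope nat_scope.
Lemma proj_surj I : chain I -> forall m y, cint (I m) y -> exists x, Lset I x /\ x m = y.
Proof.
move=> hI m y hy.
have hup : forall k z, exists w, cint (I k) z -> cint (I k.+1) w /\ f w = z.
  move=> k z; case: (pselect (cint (I k) z)) => hz; last by exists 0%R.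
  have [_ _ _ e] := hI k; move: hz; rewrite -e => -[w hw fw].
  by exists w.
have [up hup'] := choice (fun kz : nat * R => hup kz.1 kz.2).
pose u := fix u j := if j is j'.+1 then up ((m + j')%N, u j') else y.
have hu j : cint (I (m + j)%N) (u j) /\ (forall j', j = j'.+1 -> f (u j) = u j').
  elim: j => [|j [IH _]]; first by rewrite addn0.
  have [h1 h2] := hup' ((m + j)%N, u j) IH.
  by split; [rewrite addnS|move=> j' [<-]].
have hdown j : (j <= m)%N -> cint (I (m - j)) (iter j f y).
  elim: j => [|j IH] hj; first by rewrite subn0.
  have := IH (ltnW hj); have [_ _ _ e] := hI (m - j.+1).
  have -> : (m - j = (m - j.+1).+1)%N by rewrite subnSK.
  by rewrite -e iterS => hz; exists (iter j f y).
pose x : seqR R := fun k => if (m <= k)%N then u (k - m)%N else iter (m - k) f y.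
exists x; split; last by rewrite /x leqnn subnn.
split.
  move=> k; rewrite /x; case: leqP => hk.
    by have [h _] := hu (k - m)%N; rewrite subnKC in h.
  have := hdown (m - k)%N (leq_subr _ _); rewrite subKn //; exact: ltnW.
move=> k; rewrite /x; case: (leqP m k) => hk.
  rewrite (leq_trans hk (leqnSn k)) subSn //.
  by have [_ h] := hu (k - m).+1; apply: h.
case: (leqP m k.+1) => hk1.
  have e : m = k.+1 by apply/eqP; rewrite eqn_leq hk1 hk.
  by rewrite e subnn subSnn /=.
by rewrite -(subnSK hk) /=.
Qed.
Local Open Scope ring_scope.

Lemma closed_all (h : nat -> seqR R -> R) (S : nat -> set R) :
  (forall k, continuous (h k)) -> (forall k, closed (S k)) ->
  closed [set x | forall k, S k (h k x)].
Proof.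
move=> hc sc p cp k.
have : closed (h k @^-1` S k) by apply: preimage_closed => // ? _; exact: hc.
apply => B nB; have [x [Qx Bx]] := cp B nB; exists x; split => //; exact: Qx k.
Qed.

Lemma hk_cont k : continuous (fun x : seqR R => g (x k.+1) - x k).
Proof.
  move=> x.
  have h1 : (fun y : seqR R => g (y k.+1)) @ x --> g (x k.+1).
    apply: (@continuous_comp _ _ _ (fun x : seqR R => x k.+1) g).
      exact: proj_continuous.
    exact: g_cont.
  have h2 : (fun y : seqR R => y k) @ x --> x k by exact: proj_continuous.
  have h3 := cvgB h1 h2.
  exact: h3.
Qed.

Lemma Lset_split I : chain I -> Lset I =
  [set x : seqR R | forall k, cint (I k) (x k)] `&`
  [set x : seqR R | forall k, [set 0] (g (x k.+1) - x k)].
Proof.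
move=> hI; apply/seteqP; split => x [h1 h2]; split => // k.
- by rewrite /= g_eq ?h2 ?subrr //; have [? ? ? _] := hI k.+1; move/cintE: (h1 k.+1); lra.
- have := h2 k; rewrite /= g_eq; first by move/eqP; rewrite subr_eq0 => /eqP.
  by have [? ? ? _] := hI k.+1; move/cintE: (h1 k.+1); lra.
Qed.

Lemma Lset_closed I : chain I -> closed (Lset I).
Proof.
move=> hI; rewrite Lset_split //; apply: closedI.
  apply: (@closed_all (fun k x => x k) (fun k => cint (I k))) => k.
    exact: proj_continuous.
  exact: itv_closed.
apply: (@closed_all (fun k x => g (x k.+1) - x k) (fun k => [set 0])) => k.
  exact: hk_cont.
exact: closed_eq.
Qed.

Lemma Lset_compact I : chain I -> compact (Lset I).
Proof.
move=> hI; rewrite Lset_split //; apply: compact_closedI.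
  have TT := @tychonoff nat (fun _ => R) (fun k => cint (I k)). apply: TT => k. rewrite /cint. exact: segment_compact.
apply: (@closed_all (fun k x => g (x k.+1) - x k) (fun k => [set 0])) => k.
  exact: hk_cont.
exact: closed_eq.
Qed.

Lemma Lset_connected I : chain I -> connected (Lset I).
Proof.
move=> hI; apply: contrapT => /connectedPn [E [En LE sep]].
set L := Lset I.
have Lcl : closed L := Lset_closed hI.
have Lcp : compact L := Lset_compact hI.
have EL b : E b `<=` L by move=> x Ex; rewrite /L LE; case: b Ex => ?; [right|left].
have [sep1 sep2] := sep.
have Ecl b : closed (E b).
  move=> p cp.
  have pL : L p.
    apply: Lcl => B nB; have [x [Ex Bx]] := cp B nB; exists x; split => //; exact: (EL b x Ex).
  move: pL; rewrite /L LE => -[pF|pT]; case: b cp => cp //.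
  - have : (E false `&` closure (E true)) p by [].
    by rewrite sep2.
  - have : (closure (E false) `&` E true) p by [].
    by rewrite sep1.
have Ecp b : compact (E b) by apply: (subclosed_compact (Ecl b) Lcp); exact: EL.
set Pk := fun b k => (fun x : seqR R => x k) @` E b.
have Pkcl b k : closed (Pk b k).
  apply: compact_closed; first exact: _.
  apply: continuous_compact; last exact: Ecp.
  apply: continuous_subspaceT; exact: proj_continuous.
have meet k : exists a, E false a /\ exists b, E true b /\ a k = b k.
  apply: contrapT => nm.
  have disj : Pk false k `&` Pk true k = set0.
    apply/seteqP; split => // y [[a Ea ay] [b Eb by']]; apply: nm.
    by exists a; split => //; exists b; split => //; rewrite ay by'.
  have : ~ connected (cint (I k)).
    apply/connectedPn; exists (fun b => Pk b k); split.
    - move=> b; have [x Ex] := En b; by exists (x k), x.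
    - apply/seteqP; split.
        move=> y hy; have [x [Lx xk]] := proj_surj hI hy.
        move: Lx; rewrite /L LE => -[Ex|Ex]; [left|right]; by exists x.
      move=> y [] [x Ex <-]; have [h _] := EL _ _ Ex; exact: h.
    - split.
        by rewrite -(closure_id _).1 // disj.
      by rewrite -(closure_id _).1 // disj.
  by apply; rewrite /cint; exact: segment_connected.
have [a ha] := choice meet.
pose F := a @ \oo.
have FE : F (E false) by exists 0%N => // n _; exact: (ha n).1.
have [p [Ep clp]] := Ecp false F _ FE.
have pk : forall k, Pk true k (p k).
  move=> k; apply: contrapT => npk.
  set W := (fun x : seqR R => x k) @^-1` (~` Pk true k).
  have oW : open W.
    apply: open_comp; last exact: closed_openC.
    move=> ? _; exact: proj_continuous.
  have nW : nbhs p W by apply: open_nbhs_nbhs; split.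
  have FA : F [set x | Pk true k (x k)].
    exists k => // n /= kn.
    have [En' [b [Eb e]]] := ha n.
    exists b => //; apply: esym; apply: (agree _ _ e) => //.
      exact: (EL _ _ En').2.
    exact: (EL _ _ Eb).2.
  have [x [Ax Wx]] := clp _ _ FA nW.
  exact: Wx Ax.
have pk' : forall k, exists x, E true x /\ x k = p k.
  by move=> k; have [x ? ?] := pk k; exists x.
have [b hb] := choice pk'.
have bag k j : (j <= k)%N -> b k j = p j.
  apply: (agree _ _ (hb k).2).
    exact: (EL _ _ (hb k).1).2.
  exact: (EL _ _ Ep).2.
have cvb : b @ \oo --> (p : seqR R).
  apply/pointwise_cvgP => t W /nbhs_singleton Wp.
  by exists t => // n /= tn; rewrite bag.
have pT : E true p.
  apply: (@closed_cvg _ _ _ _ b (E true) (Ecl true) _ p cvb).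
  by apply: nearW => n; exact: (hb n).1.
have : (E false `&` closure (E true)) p by split => //; exact: subset_closure.
by rewrite sep2.
Qed.

Lemma dist01 (u v : R) : 0 <= u <= 1 -> 0 <= v <= 1 -> `|u - v| <= 1.
Proof. move=> /andP[? ?] /andP[? ?]; rewrite ler_norml; apply/andP; split; lra. Qed.

Lemma Lset01 I x k : chain I -> Lset I x -> 0 <= x k <= 1.
Proof.
move=> hI [h1 _]; have [? ? ? _] := hI k; move/cintE: (h1 k) => /andP[? ?].
apply/andP; split; lra.
Qed.

Lemma Lset_invlim I : chain I -> Lset I `<=` invlim f.
Proof.
move=> hI x Lx; split; last exact: Lx.2.
by move=> n; rewrite in_itv /=; exact: (Lset01 n hI Lx).
Qed.

Lemma Lset_nondeg I k : chain I -> (I k).1 < (I k).2 -> nondeg_continuum (Lset I).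
Proof.
move=> hI lt; split; first exact: Lset_compact.
split; first exact: Lset_connected.
have c1 : cint (I k) (I k).1 by apply/cintE; rewrite lexx (ltW lt).
have c2 : cint (I k) (I k).2 by apply/cintE; rewrite lexx (ltW lt).
have [x [Lx xk]] := proj_surj hI c1.
have [y [Ly yk]] := proj_surj hI c2.
exists x, y; split => //; split => // exy.
by move: lt; rewrite -xk -yk exy ltxx.
Qed.

Lemma Lset_bound I J n : chain I -> chain J -> (0 < n)%N -> I n.-1 = J n.-1 ->
  0 <= hdist (Lset I) (Lset J) <= (2^-1)^+n.
Proof.
move=> hI hJ n0 e.
have ne K : chain K -> Lset K !=set0.
  move=> hK; have [? ? ? _] := hK 0%N.
  have c : cint (K 0%N) (K 0%N).1 by apply/cintE; rewrite lexx.
  by have [x [Lx _]] := proj_surj hK c; exists x.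
have dp K K' x y : chain K -> chain K' -> Lset K x -> Lset K' y -> 0 <= dprod x y.
  move=> hK hK' Kx Ky.
  have H1 : forall k, `|x k - y k| <= 1.
    by move=> k; apply: dist01; [exact: (Lset01 k hK Kx)|exact: (Lset01 k hK' Ky)].
  have H2 : forall k, (k < 0)%N -> x k = y k by move=> k; rewrite ltn0.
  by have /andP[] := @dprod_bound R x y 0 H1 H2.
have side K K' : chain K -> chain K' -> K n.-1 = K' n.-1 ->
    forall a, Lset K a -> exists2 b, Lset K' b & dprod a b <= (2^-1)^+n.
  move=> hK hK' e' a Ka.
  have c : cint (K' n.-1) (a n.-1) by rewrite -e'; exact: Ka.1.
  have [b [Kb bn]] := proj_surj hK' c.
  exists b => //.
  have H1 : forall k, `|a k - b k| <= 1.
    by move=> k; apply: dist01; [exact: (Lset01 k hK Ka)|exact: (Lset01 k hK' Kb)].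
  have H2 : forall k, (k < n)%N -> a k = b k.
    move=> k kn; apply: (agree Ka.2 Kb.2 (esym bn)).
    by rewrite -ltnS prednK.
  by have /andP[] := @dprod_bound R a b n H1 H2.
apply: hdist_bound; [exact: ne|exact: ne| | |].
- move=> a b Ia Jb; split; [exact: (dp _ _ _ _ hI hJ)|exact: (dp _ _ _ _ hJ hI)].
- exact: side.
- by apply: side => //; rewrite e.
Qed.

Lemma main_sec : admits_splitting_sequence f ->
  exists (C : set (seqR R)) (Cn : nat -> set (seqR R)),
    [/\ nondeg_continuum C, C `<=` invlim f,
        (forall n, [/\ nondeg_continuum (Cn n), Cn n `<=` invlim f & Cn n <> C])
      & hdist (Cn n) C @[n --> \oo] --> 0].
Proof.
move=> [T [[Tb [Tim [m Tm]]] [N [S [Ninf HS]]]]].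
have hT : chain T by move=> k; have [h1 [h2 [h3 _]]] := Tb k; split.
have hl : forall p : R * R, exists q : R * R, (0 <= p.1 /\ p.1 <= p.2 /\ p.2 <= 1) ->
    [/\ 0 <= q.1, q.1 <= q.2, q.2 <= 1 & f @` cint q = cint p].
  move=> p; case: (pselect (0 <= p.1 /\ p.1 <= p.2 /\ p.2 <= 1)) => [[h1 [h2 h3]]|hn];
    last by exists p.
  by have [c [d [? ? ? e]]] := lift h1 h2 h3; exists (c, d) => _; split.
have [up hup] := choice hl.
pose J n k := if (k < n)%N then T k else iter (k - n)%N up (S n).
have Jchain n : N n -> (0 < n)%N -> chain (J n).
  move=> Nn n0.
  have [S0 [S1 [S2 [Sint Sim]]]] := HS n Nn.
  have val j : 0 <= (iter j up (S n)).1 /\ (iter j up (S n)).1 <= (iter j up (S n)).2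
      /\ (iter j up (S n)).2 <= 1.
    elim: j => [|j IH]; first by split => //; split => //; exact: ltW.
    by have [? ? ? _] := hup _ IH; rewrite iterS.
  move=> k; rewrite /J /=.
  case: (ltnP k.+1 n) => h.
    by rewrite (ltnW h); exact: hT k.
  case: (ltnP k n) => hk.
    have e : n = k.+1 by apply/eqP; rewrite eqn_leq h hk.
    have [? ? ? Tk] := hT k; split => //.
    by subst n; rewrite subnn /= Sim.
  rewrite subSn // iterS; have [? [? ?]] := val (k - n)%N.
  by have [? ? ? ->] := hup _ (val (k - n)%N).
have hN j : exists n, N n /\ (j < n)%N.
  apply: contrapT => hn; apply: Ninf.
  apply: (@sub_finite_set _ _ `I_(j.+1)); last exact: finite_II.
  move=> n Nn; rewrite /=; apply: contrapT => hnj; apply: hn; exists n; split => //.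
  by move/negP: hnj; rewrite -leqNgt.
have [nu hnu] := choice hN.
exists (Lset T), (fun j => Lset (J (nu j))); split.
- exact: (Lset_nondeg (k := m) hT (Tm m (leqnn m))).
- exact: Lset_invlim.
- move=> j; have [Nn jn] := hnu j; set n := nu j.
  have n0 : (0 < n)%N by apply: leq_ltn_trans jn.
  have hJ := Jchain n Nn n0.
  have [S0 [S1 [S2 [Sint Sim]]]] := HS n Nn.
  have Jn : J n n = S n by rewrite /J ltnn subnn.
  split.
  + by apply: (Lset_nondeg (k := n)) => //; rewrite Jn.
  + exact: Lset_invlim.
  + move=> eq.
    have [z [zS znT]] : exists z, cint (S n) z /\ ~ cint (T n) z.
      apply: contrapT => hz.
      have hin z : cint (S n) z -> (z = (T n).1 \/ z = (T n).2).
        move=> hzS; apply: Sint; split => //.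
        by apply: contrapT => nz; apply: hz; exists z.
      have h1 := hin (S n).1 ltac:(by apply/cintE; rewrite lexx ltW).
      have h2 := hin (S n).2 ltac:(by apply/cintE; rewrite lexx ltW).
      have h3 := hin (((S n).1 + (S n).2) / 2) ltac:(by apply/cintE; apply/andP; split; lra).
      lra.
    have cz : cint (J n n) z by rewrite Jn.
    have [x [Lx xn]] := proj_surj hJ cz.
    have : Lset T x by rewrite -eq.
    by move=> [h _]; apply: znT; rewrite -xn; exact: h n.
- have hb j : 0 <= hdist (Lset (J (nu j))) (Lset T) <= (2^-1)^+j.
    have [Nn jn] := hnu j; set n := nu j.
    have n0 : (0 < n)%N by apply: leq_ltn_trans jn.
    have e : J n n.-1 = T n.-1 by rewrite /J ltn_predL n0.
    have /andP[h1 h2] := Lset_bound (Jchain n Nn n0) hT n0 e.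
    rewrite h1 /=; apply: le_trans h2 _; apply: ler_wiXn2l; [lra|lra|exact: ltnW].
  have geo : (fun j => ((2:R)^-1)^+j) @ \oo --> 0.
    by apply: cvg_expr; rewrite ger0_norm; lra.
  apply/cvgrPdist_lt => e e0.
  move/cvgrPdist_lt: geo => /(_ e e0); apply: filterS => j.
  rewrite !sub0r !normrN => h; have /andP[h1 h2] := hb j.
  rewrite ger0_norm //; apply: le_lt_trans h2 _; move: h.
  by rewrite ger0_norm // exprn_ge0.
Qed.

End L.

Theorem lemma4p6 (R : realType) (f : R -> R) :
  {within `[0, 1]%classic, continuous f} ->
  f @` `[0, 1]%classic = `[0, 1]%classic ->
  admits_splitting_sequence f ->
  exists (C : set (seqR R)) (Cn : nat -> set (seqR R)),
    [/\ nondeg_continuum C, C `<=` invlim f,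
        (forall n, [/\ nondeg_continuum (Cn n), Cn n `<=` invlim f & Cn n <> C])
      & hdist (Cn n) C @[n --> \oo] --> 0].
Proof.
move=> fc fs hs.
exact: (@main_sec R f fc fs hs).
Qed.
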